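(* Let $\mathcal{G}$ be a grounded degree sandwich monotone graph class and let $(G,\omega)$ be a weighted graph. Then $(G,\omega)$ is a level-$\mathcal{G}$ weighted graph if and only if $G\in\mathcal{G}$ and every degree-minimal edge elimination scheme of $(G,\omega)$ is a sorted $\mathcal{G}$-safe edge elimination scheme.
   Context: All graphs are finite, simple and undirected. A weighted graph is a pair $(G,\omega)$ with $\omega:E(G)\to\{1,\dots,k\}$ surjective for some $k\ge1$. For $1\le i\le k+1$, the $i$-th level graph of $(G,\omega)$ is obtained from $G$ by removing all edges $e$ with $\omega(e)<i$; $(G,\omega)$ is level-$\mathcal{G}$ if all level graphs are in $\mathcal{G}$. For $G\in\mathcal{G}$, $F\subseteq E(G)$ (resp. edge $e$) is $\mathcal{G}$-safe if $G-F\in\mathcal{G}$ (resp. $G-e\in\mathcal{G}$); $\mathcal{G}$ is grounded if $E(G)$ is $\mathcal{G}$-safe for every $G\in\mathcal{G}$. Given a graph $H$ and $F\subseteq E(H)$, an edge $e\in F$ is degree-minimal in $F$ if its endpoints can be named $u,v$ so that (i) $u$ has the smallest degree in $H$ among all vertices incident to an edge of $F$, and (ii) $v$ has the smallest degree in $H$ among all $w$ with $uw\in F$. $\mathcal{G}$ is degree sandwich monotone if for each $G\in\mathcal{G}$ and each $\mathcal{G}$-safe $F\subseteq E(G)$, every degree-minimal edge in $F$ is $\mathcal{G}$-safe. For an edge ordering $\tau=(e_1,\dots,e_m)$ let $G^i_\tau=G-\{e_1,\dots,e_i\}$, $G^0_\tau=G$. A $\mathcal{G}$-safe edge elimination scheme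 of $G$ is an edge ordering with $G^i_\tau\in\mathcal{G}$ for all $i\in\{1,\dots,m\}$; it is sorted if $i<j$ implies $\omega(e_i)\le\omega(e_j)$. A degree-minimal edge elimination scheme of $(G,\omega)$ is an edge ordering such that for every $i$, $e_i$ is degree-minimal (degrees in $G^{i-1}_\tau$) in the set of minimum-weight edges of $G^{i-1}_\tau$. *)

(* Defs.v *)
From mathcomp Require Import all_boot.
Set Implicit Arguments. Unset Strict Implicit. Unset Printing Implicit Defensive.

(* A finite simple graph on the vertex set V (a finType) is given by its edge
   set E : {set {set V}}, every edge being a 2-element subset of V. *)
Definition is_graph (V : finType) (E : {set {set V}}) : Prop :=
  forall e, e \in E -> #|e| = 2.

Definition graph_class := forall V : finType, {set {set V}} -> Prop.

Definition deg (V : finType) (H : {set {set V}}) (v : V) : nat :=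
  #|[set e in H | v \in e]|.

Definition weighting (V : finType) (E : {set {set V}}) (w : {set V} -> nat) (k : nat) : Prop :=
  1 <= k /\ (forall e, e \in E -> 1 <= w e <= k) /\
  (forall i, 1 <= i <= k -> exists2 e, e \in E & w e = i).

Definition level_graph (V : finType) (E : {set {set V}}) (w : {set V} -> nat) (i : nat) :
  {set {set V}} := [set e in E | i <= w e].

Definition level_class (C : graph_class) (V : finType) (E : {set {set V}})
  (w : {set V} -> nat) (k : nat) : Prop :=
  forall i, 1 <= i <= k.+1 -> C V (level_graph E w i).

Definition grounded (C : graph_class) : Prop :=
  forall (V : finType) (E : {set {set V}}), is_graph E -> C V E -> C V (E :\: E).

Definition degree_minimal (V : finType) (H F : {set {set V}}) (e : {set V}) : Prop :=
  e \in F /\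
  exists u v : V, e = [set u; v] /\
    (forall f x, f \in F -> x \in f -> deg H u <= deg H x) /\
    (forall x, [set u; x] \in F -> deg H v <= deg H x).

Definition degree_sandwich_monotone (C : graph_class) : Prop :=
  forall (V : finType) (E : {set {set V}}), is_graph E -> C V E ->
  forall F : {set {set V}}, F \subset E -> C V (E :\: F) ->
  forall e, degree_minimal E F e -> C V (E :\: [set e]).

Definition edge_ordering (V : finType) (E : {set {set V}}) (s : seq {set V}) : Prop :=
  perm_eq s (enum E).

Definition Gi (V : finType) (E : {set {set V}}) (s : seq {set V}) (i : nat) :
  {set {set V}} := E :\: [set e in take i s].

Definition safe_scheme (C : graph_class) (V : finType) (E : {set {set V}})
  (s : seq {set V}) : Prop :=
  edge_ordering E s /\ forall i, 1 <= i <= size s -> C V (Gi E s i).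

Definition sorted_scheme (V : finType) (w : {set V} -> nat) (s : seq {set V}) : Prop :=
  forall i j, i < j < size s -> w (nth set0 s i) <= w (nth set0 s j).

Definition min_weight_edges (V : finType) (H : {set {set V}}) (w : {set V} -> nat) :
  {set {set V}} := [set e in H | [forall f in H, w e <= w f]].

Definition degmin_scheme (V : finType) (E : {set {set V}}) (w : {set V} -> nat)
  (s : seq {set V}) : Prop :=
  edge_ordering E s /\
  forall i, i < size s ->
    let H := Gi E s i in degree_minimal H (min_weight_edges H w) (nth set0 s i).

(* Main.v *)
Require Import Defs.
From mathcomp Require Import all_boot.
From mathcomp Require Import zify.
Set Implicit Arguments. Unset Strict Implicit. Unset Printing Implicit Defensive.

Lemma argmin_ex (T : finType) (P : pred T) (F : T -> nat) x0 :
  P x0 -> exists x, P x /\ forall y, P y -> F x <= F y.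
Proof. move=> Px0; case: (arg_minnP F Px0) => x Px H; by exists x. Qed.

Lemma nth_in_take (T : eqType) x0 (s : seq T) i j :
  uniq s -> j < size s -> (nth x0 s j \in take i s) = (j < i).
Proof. move=> us js; by rewrite in_take ?mem_nth // index_uniq. Qed.

Lemma degmin_exists V (H : {set {set V}}) (w : {set V} -> nat) :
  is_graph H -> H != set0 -> exists e, degree_minimal H (min_weight_edges H w) e.
Proof.
move=> gH /set0Pn [f0 f0H].
have [m [/= mH mmin]] := argmin_ex (P := fun f => f \in H) w f0H.
have mM : m \in min_weight_edges H w.
  by rewrite inE mH; apply/forall_inP => f fH; exact: mmin.
have MH : forall f, f \in min_weight_edges H w -> f \in H.
  by move=> f; rewrite inE => /andP[].
have : #|m| == 2 by rewrite gH.
move=> /cards2P [a [b [ab em]]].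
have inc0 : [exists f in min_weight_edges H w, a \in f].
  by apply/existsP; exists m; rewrite mM em !inE eqxx.
have [u [/= uinc umin]] := argmin_ex (P := fun t => [exists f in min_weight_edges H w, t \in f]) (deg H) inc0.
case/existsP: uinc => f /andP [fM uf].
have : #|f| == 2 by rewrite gH // MH.
move=> /cards2P [x [y [xy ef]]].
have [z fz] : exists z, [set u; z] \in min_weight_edges H w.
  move: uf; rewrite ef !inE => /orP [] /eqP ->.
    by exists y; rewrite -ef.
  by exists x; rewrite setUC -ef.
have [v [/= vM vmin]] := argmin_ex (fun t => deg H t) (P := fun t => [set u; t] \in min_weight_edges H w) fz.
exists [set u; v]; split => //.
exists u, v; split => //; split.
  move=> g t gM tg; apply: umin; apply/existsP; exists g; by rewrite gM tg.
by move=> t tM; apply: vmin.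
Qed.

Lemma scheme_exists V (w : {set V} -> nat) :
  forall n (H : {set {set V}}), #|H| = n -> is_graph H -> exists s, degmin_scheme H w s.
Proof.
elim=> [|n IH] H cH gH.
  exists [::]; split => //.
  by rewrite /edge_ordering (cards0_eq cH) enum_set0.
have H0 : H != set0 by apply/eqP => H0; rewrite H0 cards0 in cH.
have [e0 de0] := degmin_exists w gH H0.
have e0H : e0 \in H by case: de0; rewrite inE => /andP[].
have cH' : #|H :\ e0| = n by move: cH; rewrite (cardsD1 e0) e0H; case.
have gH' : is_graph (H :\ e0) by move=> f; rewrite inE => /andP[_ /gH].
have [s' [ps' ds']] := IH _ cH' gH'.
exists (e0 :: s'); split.
  apply: uniq_perm; last first.
  - move=> x; rewrite in_cons (perm_mem ps') !mem_enum !inE; case: eqP => // ->; by rewrite e0H.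
  - exact: enum_uniq.
  rewrite /= (perm_uniq ps') enum_uniq (perm_mem ps') mem_enum !inE eqxx.
  done.
case=> [|i] /= isz.
  have -> : Gi H (e0 :: s') 0 = H by apply/setP => x; rewrite !inE.
  exact: de0.
have -> : Gi H (e0 :: s') i.+1 = Gi (H :\ e0) s' i.
  apply/setP => x; rewrite /Gi /= !inE.
  by case: (x == e0); case: (x \in take i s').
exact: ds'.
Qed.

Theorem lemma3p1 (C : graph_class) (V : finType) (E : {set {set V}})
  (w : {set V} -> nat) (k : nat) :
  grounded C -> degree_sandwich_monotone C ->
  is_graph E -> weighting E w k ->
  (level_class C E w k <->
   (C V E /\ forall s : seq {set V}, degmin_scheme E w s ->
      sorted_scheme w s /\ safe_scheme C E s)).
Proof.
move=> _ dsm gE [k1 [wr wsurj]].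
have lev1 : level_graph E w 1 = E.
  apply/setP => x; rewrite inE; case xE: (x \in E) => //=.
  by case/andP: (wr _ xE).
split.
- move=> lc.
  have CE : C V E by rewrite -lev1; apply: lc; lia.
  split => // s [ps ds].
  have us : uniq s by rewrite (perm_uniq ps) enum_uniq.
  have ms : forall x, (x \in s) = (x \in E) by move=> x; rewrite (perm_mem ps) mem_enum.
  have srt : sorted_scheme w s.
    move=> i j /andP [ij js].
    have is_ : i < size s by lia.
    case: (ds i is_) => + _; rewrite inE => /andP [_ /forall_inP]; apply.
    rewrite /Gi !inE nth_in_take // -ms mem_nth // andbT; lia.
  split => //; split => //.
  suff: forall i, i <= size s -> C V (Gi E s i) by move=> h i /andP[_ /h].
  elim=> [|i IHi] isz.
    have -> : Gi E s 0 = E by apply/setP => x; rewrite /Gi !inE take0 in_nil.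
    done.
  have isz' : i < size s by [].
  set H := Gi E s i.
  set e := nth set0 s i.
  have CH := IHi (ltnW isz).
  have HE : H \subset E by apply/subsetP => x; rewrite !inE => /andP[].
  have gH : is_graph H by move=> f /(subsetP HE) /gE.
  have de := ds i isz'; rewrite -/H -/e in de.
  have eM : e \in min_weight_edges H w by case: de.
  have eE : e \in E by rewrite -ms mem_nth.
  have FH : min_weight_edges H w \subset H by apply/subsetP => x; rewrite inE => /andP[].
  have Hlev : H :\: min_weight_edges H w = level_graph E w (w e).+1.
    move: eM; rewrite inE => /andP [eH /forall_inP emin].
    apply/setP => x; rewrite in_setD [x \in level_graph _ _ _]inE.
    have xM : (x \in min_weight_edges H w) = (x \in H) && [forall f in H, w x <= w f].
      by rewrite inE.
    have xHe : (x \in H) = (x \notin take i s) && (x \in E) by rewrite !inE.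
    rewrite xM.
    apply/idP/idP.
      case/andP => /negP xnM xH; move: (xH); rewrite xHe => /andP [xt xE]; rewrite xE /=.
      case: (ltnP (w e) (w x)) => // wxe; exfalso; apply: xnM.
      rewrite xH; apply/forall_inP => f fH; exact: leq_trans wxe (emin f fH).
    case/andP => xE wx.
    have xt : x \notin take i s.
      apply/negP => xt.
      have xs : x \in s by rewrite ms.
      move: xt; rewrite -(nth_index set0 xs) nth_in_take // ?index_mem // => ii.
      have := srt (index x s) i; rewrite ii isz' nth_index //= => /(_ erefl); rewrite -/e; lia.
    have xH : x \in H by rewrite xHe xt xE.
    rewrite xH andbT /=; apply/negP => /forall_inP /(_ e eH); lia.
  have CF : C V (H :\: min_weight_edges H w).
    rewrite Hlev; apply: lc; case/andP: (wr _ eE); lia.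
  have := dsm V H gH CH _ FH CF e de.
  have -> // : Gi E s i.+1 = H :\: [set e].
  apply/setP => x; rewrite /H /Gi (take_nth set0 isz') !inE mem_rcons in_cons.
  by case: (x == e); case: (x \in take i s).
- case=> CE hs i /andP [i1 ik].
  have [s ds] := scheme_exists w (erefl #|E|) gE.
  have [srt [ps safe]] := hs s ds.
  have us : uniq s by rewrite (perm_uniq ps) enum_uniq.
  have ms : forall x, (x \in s) = (x \in E) by move=> x; rewrite (perm_mem ps) mem_enum.
  set j := find (fun e => i <= w e) s.
  have Gj : Gi E s j = level_graph E w i.
    apply/setP => x; rewrite !inE.
    case xE: (x \in E); rewrite ?andbF ?andbT //.
    have xs : x \in s by rewrite ms.
    rewrite -(nth_index set0 xs) nth_in_take ?index_mem //.
    case: (ltnP (index x s) j) => xj /=.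
      by rewrite (before_find _ xj).
    have hf : has (fun e => i <= w e) s.
      by rewrite has_find; apply: leq_ltn_trans xj _; rewrite index_mem.
    have := nth_find set0 hf; rewrite -/j => wj.
    case: (ltnP j (index x s)) => xj'.
      by symmetry; apply: leq_trans wj (srt _ _ _); rewrite xj' index_mem.
    have -> : index x s = j by apply/eqP; rewrite eqn_leq xj xj'.
    by rewrite wj.
  rewrite -Gj.
  case: (posnP j) => [->|jp].
    have -> : Gi E s 0 = E by apply/setP => x; rewrite /Gi !inE take0 in_nil.
    done.
  by apply: safe; rewrite jp find_size.
Qed.
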